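(* Let $(L,L')$ be a pair of commensurable $K$-lattices, $L=(\Lambda,\phi)$, $L'=(\Lambda',\phi')$, whose classes modulo scaling coincide, i.e. $L'=\lambda L$ for some $\lambda\in\mathbb C^*$. Then either $L=L'$ or $\phi=\phi'=0$.
   Context: $K$ is an imaginary quadratic field with a fixed embedding $K\subset\mathbb C$, $\mathcal O$ its ring of integers. A $K$-lattice $(\Lambda,\phi)$: finitely generated $\mathcal O$-submodule $\Lambda\subset\mathbb C$ with $\Lambda\otimes_{\mathcal O}K\cong K$ and $\mathcal O$-module map $\phi:K/\mathcal O\to K\Lambda/\Lambda$; commensurability: $K\Lambda_1=K\Lambda_2$ and $\phi_1=\phi_2$ mod $\Lambda_1+\Lambda_2$; scaling $\lambda(\Lambda,\phi)=(\lambda\Lambda,\lambda\phi)$. *)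

(* Defs.v *)
From HB Require Import structures.
From mathcomp Require Import all_boot all_order all_algebra.
From mathcomp Require Import reals complex.
Set Implicit Arguments. Unset Strict Implicit. Unset Printing Implicit Defensive.
Import Order.TTheory GRing.Theory Num.Theory.
Local Open Scope ring_scope.

Section KLattices.
Variable R : realType.
Local Notation C := (R[i]).

(* An imaginary quadratic field K = Q(w) inside C, where w ^+ 2 = - d, d > 0. *)
Definition imag_quad_gen (d : nat) (w : C) : Prop :=
  (0 < d)%N /\ w ^+ 2 = - (d%:R).

Definition inK (w x : C) : Prop := exists a b : rat, x = ratr a + ratr b * w.

Definition inO (w x : C) : Prop :=
  inK w x /\ exists p : {poly int}, p \is monic /\ root (map_poly intr p) x.

Definition KSpan (w : C) (L : C -> Prop) (x : C) : Prop :=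
  exists n (k l : 'I_n -> C),
    (forall i, inK w (k i)) /\ (forall i, L (l i)) /\ x = \sum_(i < n) k i * l i.

(* Lambda is a finitely generated O-submodule of C with Lambda (x)_O K ~= K,
   i.e. K Lambda is a one-dimensional K-subspace of C. *)
Definition is_lattice (w : C) (L : C -> Prop) : Prop :=
  [/\ L 0,
      (forall x y, L x -> L y -> L (x - y)),
      (forall a x, inO w a -> L x -> L (a * x)),
      (exists n (g : 'I_n -> C), forall x,
          L x <-> exists c : 'I_n -> C, (forall i, inO w (c i)) /\
                                       x = \sum_(i < n) c i * g i) &
      (exists alpha : C, alpha != 0 /\
          forall x, KSpan w L x <-> exists k, inK w k /\ x = k * alpha)].

(* An O-module map phi : K/O -> K Lambda / Lambda, represented by a lift
   f : K -> K Lambda (values outside K are irrelevant). *)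
Definition is_phi (w : C) (L : C -> Prop) (f : C -> C) : Prop :=
  [/\ (forall x, inK w x -> KSpan w L (f x)),
      (forall x y, inK w x -> inK w y -> inO w (x - y) -> L (f x - f y)),
      (forall x y, inK w x -> inK w y -> L (f (x + y) - f x - f y)) &
      (forall a x, inO w a -> inK w x -> L (f (a * x) - a * f x))].

Definition is_Klattice (w : C) (L : C -> Prop) (f : C -> C) : Prop :=
  is_lattice w L /\ is_phi w L f.

(* equality of K-lattices: same Lambda and same phi (as maps into K Lambda/Lambda) *)
Definition KL_eq (w : C) (L1 : C -> Prop) (f1 : C -> C)
    (L2 : C -> Prop) (f2 : C -> C) : Prop :=
  (forall x, L1 x <-> L2 x) /\ (forall x, inK w x -> L1 (f1 x - f2 x)).

Definition commensurable (w : C) (L1 : C -> Prop) (f1 : C -> C)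
    (L2 : C -> Prop) (f2 : C -> C) : Prop :=
  (forall x, KSpan w L1 x <-> KSpan w L2 x) /\
  (forall x, inK w x -> exists y z, L1 y /\ L2 z /\ f1 x - f2 x = y + z).

Definition scaled_eq (w : C) (lam : C) (L1 : C -> Prop) (f1 : C -> C)
    (L2 : C -> Prop) (f2 : C -> C) : Prop :=
  (forall x, L2 x <-> exists y, L1 y /\ x = lam * y) /\
  (forall x, inK w x -> L2 (f2 x - lam * f1 x)).

Definition phi_zero (w : C) (L : C -> Prop) (f : C -> C) : Prop :=
  forall x, inK w x -> L (f x).

End KLattices.

(* Main.v *)
Require Import Defs.
From HB Require Import structures.
From mathcomp Require Import all_boot all_order all_algebra.
From mathcomp Require Import reals complex.
From mathcomp Require Import ring.
Import Order.TTheory GRing.Theory Num.Theory.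
Local Open Scope ring_scope.
Set Implicit Arguments. Unset Strict Implicit.

Section Aux.
Variable R : realType.
Local Notation C := (R[i]).
Variables (d : nat) (w : C).
Hypothesis hw : imag_quad_gen d w.

Definition Zw (x : C) := exists a b : int, x = a%:~R + b%:~R * w.

Lemma Zw_O x : Zw x -> inO w x.
Proof.
case=> a [b ->]; split.
  by exists a%:~R, b%:~R; rewrite !ratr_int.
exists (('X - a%:P)^+2 + ((d%:R) * b^+2)%:P); split.
  rewrite monicE lead_coefDl.
    by have := monic_exp 2 (monicXsubC a); rewrite monicE.

  by rewrite size_exp_XsubC; apply: (leq_ltn_trans (size_polyC_leq1 _)).
rewrite /root rmorphD /= expr2 rmorphM /= rmorphB /= map_polyX map_polyC /= map_polyC /= !hornerE.
case: hw => _ hw2.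
rewrite !rmorphM /= rmorph_nat.
have -> : (a%:~R + b%:~R * w - a%:~R) * (a%:~R + b%:~R * w - a%:~R) = (b%:~R * b%:~R) * w^+2 :> C by ring.
by rewrite hw2; apply/eqP; ring.
Qed.

Lemma inK_rat q : inK w (ratr q).
Proof. by exists q, 0; rewrite rmorph0 mul0r addr0. Qed.

Lemma inK_int (z : int) : inK w z%:~R.
Proof. by rewrite -ratr_int; apply: inK_rat. Qed.

Lemma inK1 : inK w 1.
Proof. by have := inK_int 1; rewrite (rmorph1 intr). Qed.

Lemma inK_add x y : inK w x -> inK w y -> inK w (x + y).
Proof.
case=> a [b ->] [c [e ->]]; exists (a + c), (b + e).
by rewrite !rmorphD /=; ring.
Qed.

Lemma inK_opp x : inK w x -> inK w (- x).
Proof. case=> a [b ->]; exists (- a), (- b); rewrite !rmorphN /=; ring. Qed.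

Lemma d_w : (d%:R : C) = - w ^+ 2.
Proof. by case: hw => _ ->; rewrite opprK. Qed.

Lemma inK_mul x y : inK w x -> inK w y -> inK w (x * y).
Proof.
case=> a [b ->] [c [e ->]]; exists (a * c - d%:R * (b * e)), (a * e + b * c).
rewrite !(rmorphD, rmorphB, rmorphN, rmorphM) /= ratr_nat d_w; ring.
Qed.

Lemma inK_inv x : inK w x -> inK w x^-1.
Proof.
move=> hx; have [->|x0] := eqVneq x 0; first by rewrite invr0; apply: (inK_int 0).
case: hx x0 => a [b ->] x0.
set n : rat := a ^+ 2 + d%:R * b ^+ 2.
have n0 : n != 0.
  apply/eqP=> /eqP; rewrite (paddr_eq0 (sqr_ge0 a) (mulr_ge0 (ler0n _ d) (sqr_ge0 b))).
  case/andP; rewrite sqrf_eq0 mulf_eq0 sqrf_eq0 pnatr_eq0.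
  case: hw => /lt0n_neq0 /negPf -> _ /= /eqP a0 /eqP b0.
  by move: x0; rewrite a0 b0 rmorph0 mul0r addr0 eqxx.
have rn0 : ratr n != 0 :> C by rewrite fmorph_eq0.
exists (a / n), (- b / n).
apply: (mulfI x0); rewrite mulfV //.
have E : (ratr a + ratr b * w) * (ratr a - ratr b * w) = ratr n :> C.
  rewrite /n !(rmorphD, rmorphM, rmorphXn) /= ratr_nat d_w; ring.
rewrite !(rmorphM, rmorphN) /= fmorphV.
transitivity ((ratr a + ratr b * w) * (ratr a - ratr b * w) / ratr n :> C); last by ring.
by rewrite E mulfV.
Qed.

Lemma inK_denom x : inK w x -> exists N : int, N != 0 /\ Zw (N%:~R * x).
Proof.
case=> a [b ->].
have e : forall q, (denq q)%:~R * ratr q = (numq q)%:~R :> C.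
  by move=> q; rewrite /ratr mulrC divfK // intr_eq0 denq_neq0.
exists (denq a * denq b); split; first by rewrite mulf_neq0 ?denq_neq0.
exists (denq b * numq a), (denq a * numq b).
rewrite !rmorphM /= -(e a) -(e b); ring.
Qed.

Lemma L_add L x y : is_lattice w L -> L x -> L y -> L (x + y).
Proof.
case=> h0 hs _ _ _ hx hy; have := hs _ _ hx (hs _ _ h0 hy).
by rewrite sub0r opprK.
Qed.

Lemma L_opp L x : is_lattice w L -> L x -> L (- x).
Proof. by case=> h0 hs _ _ _ hx; have := hs _ _ h0 hx; rewrite sub0r. Qed.

Lemma L_Zw L a x : is_lattice w L -> Zw a -> L x -> L (a * x).
Proof. by case=> _ _ hm _ _ ha; apply: hm; apply: Zw_O. Qed.

Lemma Zw_int (z : int) : Zw z%:~R.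
Proof. by exists z, 0; rewrite mul0r addr0. Qed.

End Aux.

Theorem mainTheorem14 (R : realType) (d : nat) (w : R[i])
    (L1 : R[i] -> Prop) (f1 : R[i] -> R[i])
    (L2 : R[i] -> Prop) (f2 : R[i] -> R[i]) :
  imag_quad_gen d w ->
  is_Klattice w L1 f1 -> is_Klattice w L2 f2 ->
  commensurable w L1 f1 L2 f2 ->
  (exists lam : R[i], lam != 0 /\ scaled_eq w lam L1 f1 L2 f2) ->
  KL_eq w L1 f1 L2 f2 \/ (phi_zero w L1 f1 /\ phi_zero w L2 f2).
Proof.
move=> hw [latL1 phiL1] [latL2 phiL2] [KS comm] [lam [lam0 [sc1 sc2]]].
have lamK : inK w lam.
  case: (latL1) => _ _ _ _ [alpha [a0 Ha]].
  have : KSpan w L1 alpha.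
    apply/Ha; exists 1; split; [apply: inK1|by rewrite mul1r].
  case=> n [k [l [hk [hl ea]]]].
  have : KSpan w L2 (lam * alpha).
    exists n, k, (fun i => lam * l i); split=> //; split.
      by move=> i; apply/sc1; exists (l i).
    by rewrite ea mulr_sumr; apply: eq_bigr => i _; rewrite mulrCA.
  move/KS/Ha=> [k' [hk' e]].
  by move/(mulIf a0): e => ->.
have [l1|l1] := eqVneq lam 1.
  left; split.
    move=> x; rewrite sc1 l1; split; first by move=> hx; exists x; rewrite mul1r.
    by case=> y [hy ->]; rewrite mul1r.
  move=> x hx; have := sc2 x hx; rewrite l1 mul1r => /sc1 [y [hy e]].
  have -> : f1 x - f2 x = - (f2 x - f1 x) by rewrite opprB.
  by rewrite e l1 mul1r; exact: L_opp latL1 hy.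
right.
have [N [N0 ZN]] := inK_denom lamK.
set nu := N%:~R * (1 - lam).
have nu0 : nu != 0 by rewrite mulf_neq0 ?intr_eq0 // subr_eq0 eq_sym.
have nuK : inK w nu by rewrite /nu; apply: (inK_mul hw); [apply: inK_int|apply: inK_add => //; [apply: inK1|apply: inK_opp]].
have [M [M0 ZM]] := inK_denom (inK_inv hw nuK).
have H : forall x, inK w x -> L1 (M%:~R * f1 x).
  move=> x hx.
  have [y [z [hy [hz e1]]]] := comm x hx.
  have [z' [hz' ez]] := (sc1 z).1 hz.
  have [t' [ht' et]] := (sc1 _).1 (sc2 x hx).
  have E : (1 - lam) * f1 x = (f1 x - f2 x) + (f2 x - lam * f1 x) by ring.
  rewrite e1 et ez in E.
  have E2 : nu * f1 x = N%:~R * y + (N%:~R * lam) * (z' + t').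
    by rewrite /nu -mulrA E; ring.
  have Lnu : L1 (nu * f1 x).
    rewrite E2; apply: (L_add latL1) => //; first by apply: (L_Zw hw) => //; apply: Zw_int.
    apply: (L_Zw hw) => //; apply: (L_add latL1) => //.
  have -> : M%:~R * f1 x = M%:~R * nu^-1 * (nu * f1 x).
    by rewrite -mulrA (mulrA nu^-1) mulVf // mul1r.
  by apply: (L_Zw hw).
have M0' : (M%:~R : R[i]) != 0 by rewrite intr_eq0.
have P1 : phi_zero w L1 f1.
  move=> x hx.
  have hy : inK w (x / M%:~R) by apply: (inK_mul hw) => //; apply: (inK_inv hw); apply: inK_int.
  case: phiL1 => _ _ _ h4.
  have ZMO : inO w (M%:~R) by apply: (Zw_O hw); apply: Zw_int.
  have := h4 _ _ ZMO hy.
  rewrite mulrC divfK // => h.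
  have := L_add latL1 h (H _ hy).
  by rewrite subrK.
split=> // x hx.
have := L_add latL2 (sc2 x hx) ((sc1 _).2 (ex_intro _ (f1 x) (conj (P1 x hx) erefl))).
by rewrite subrK.
Qed.
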